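(* Let $\{D_1,\ldots,D_n\}$ be a program (a finite set of $D$-formulas) and let $G$ be a goal ($G$-formula), in the language and operational semantics described in the context. Then $ex(\{D_1,\ldots,D_n\},G)$ terminates with a success if and only if $G$ follows from $\{!D_1,\ldots,!D_n\}$ in intuitionistic affine logic (intuitionistic linear logic together with the weakening rule).
   Context: Formulas are first-order, built over atomic formulas $A$. Goals ($G$-formulas) and modules ($D$-formulas) are given by the grammar $G ::= A \mid G\land G \mid D \Rightarrow G \mid \exists x\, G$, $D ::= A \mid G\supset D \mid \forall x\, D \mid D \sqcap D \mid D\land D$. A program $\mathcal{P}$ is a set of $D$-formulas. The connective $\sqcap$ is the choice-conjunction (additive conjunction $\&$) of linear logic. When read as formulas of intuitionistic affine logic, $D \Rightarrow G$ means that $D$ is added as a reusable clause for solving $G$ (i.e. $!D \multimap G$), $G\supset D$ is implication from the goal $G$ to $D$, and $!D$ marks $D$ as a reusable clause. Execution $ex(\mathcal{P},G)$ and backchaining $bchain(D,\mathcal{P},A)$ are defined by the rules: (1) $bchain(A,\mathcal{P},A)$ holds (success); (2) $bchain(G_1\supset D,\mathcal{P},A)$ if $ex(\mathcal{P},G_1)$ and $bchain(D,\mathcal{P},A)$; (3) $bchain(\forall x\,D,\mathcal{P},A)$ if $bchain([t/x]D,\mathcal{P},A)$ for some term $t$; (4) $bchain(D_0\land D_1,\mathcal{P},A)$ if $bchain(D_0,\mathcal{P},A)$; (5) $bchain(D_0\land D_1,\mathcal{P},A)$ if $bchain(D_1,\mathcal{P},A)$; (6) $bchain(D_0\sqcap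 D_1,\mathcal{P},A)$ if one chooses a successful one between $bchain(D_0,\mathcal{P},A)$ and $bchain(D_1,\mathcal{P},A)$ (the unchosen one is discarded); (7) $ex(\mathcal{P},A)$ if $D\in\mathcal{P}$ and $bchain(D,\mathcal{P},A)$; (8) $ex(\mathcal{P},G_1\land G_2)$ if $ex(\mathcal{P},G_1)$ and $ex(\mathcal{P},G_2)$; (9) $ex(\mathcal{P},\exists x\,G_1)$ if $ex(\mathcal{P},[t/x]G_1)$ for some term $t$; (10) $ex(\mathcal{P},D\Rightarrow G_1)$ if $ex(\{D\}\cup\mathcal{P},G_1)$. *)

(* Defs.v *)
(* First-order syntax in locally nameless style:
   bound variables are de Bruijn indices (BVar), free variables are names (FVar). *)
From Stdlib Require Import List Arith Bool Permutation.
Import ListNotations.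

Inductive term : Type :=
| BVar : nat -> term
| FVar : nat -> term
| Fn   : nat -> list term -> term.

Fixpoint topen (k : nat) (u : term) (t : term) : term :=
  match t with
  | BVar i => if Nat.eqb i k then u else BVar i
  | FVar x => FVar x
  | Fn f l => Fn f (map (topen k u) l)
  end.

Fixpoint tlc_at (n : nat) (t : term) : bool :=
  match t with
  | BVar i => Nat.ltb i n
  | FVar _ => true
  | Fn _ l => forallb (tlc_at n) l
  end.

Definition term_lc (t : term) : Prop := tlc_at 0 t = true.

Fixpoint tfv (x : nat) (t : term) : bool :=
  match t with
  | BVar _ => false
  | FVar y => Nat.eqb x y
  | Fn _ l => existsb (tfv x) l
  end.

(** * Goals (G-formulas) and modules (D-formulas) *)
Inductive goal : Type :=
| GAtom : nat -> list term -> goal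
| GAnd  : goal -> goal -> goal
| GAug  : prog -> goal -> goal
| GEx   : goal -> goal
with prog : Type :=
| DAtom : nat -> list term -> prog
| DImp  : goal -> prog -> prog
| DAll  : prog -> prog
| DChoice : prog -> prog -> prog
| DAnd  : prog -> prog -> prog.

Fixpoint gopen (k : nat) (u : term) (G : goal) : goal :=
  match G with
  | GAtom p l => GAtom p (map (topen k u) l)
  | GAnd G1 G2 => GAnd (gopen k u G1) (gopen k u G2)
  | GAug D G1 => GAug (dopen k u D) (gopen k u G1)
  | GEx G1 => GEx (gopen (S k) u G1)
  end
with dopen (k : nat) (u : term) (D : prog) : prog :=
  match D with
  | DAtom p l => DAtom p (map (topen k u) l)
  | DImp G1 D1 => DImp (gopen k u G1) (dopen k u D1)
  | DAll D1 => DAll (dopen (S k) u D1)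
  | DChoice D1 D2 => DChoice (dopen k u D1) (dopen k u D2)
  | DAnd D1 D2 => DAnd (dopen k u D1) (dopen k u D2)
  end.

Fixpoint glc_at (n : nat) (G : goal) : bool :=
  match G with
  | GAtom _ l => forallb (tlc_at n) l
  | GAnd G1 G2 => glc_at n G1 && glc_at n G2
  | GAug D G1 => dlc_at n D && glc_at n G1
  | GEx G1 => glc_at (S n) G1
  end
with dlc_at (n : nat) (D : prog) : bool :=
  match D with
  | DAtom _ l => forallb (tlc_at n) l
  | DImp G1 D1 => glc_at n G1 && dlc_at n D1
  | DAll D1 => dlc_at (S n) D1
  | DChoice D1 D2 => dlc_at n D1 && dlc_at n D2
  | DAnd D1 D2 => dlc_at n D1 && dlc_at n D2
  end.

Definition goal_lc (G : goal) : Prop := glc_at 0 G = true.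
Definition prog_lc (D : prog) : Prop := dlc_at 0 D = true.

Inductive ex : list prog -> goal -> Prop :=
| ex_atom : forall P D p l, In D P -> bchain D P p l -> ex P (GAtom p l)
| ex_and  : forall P G1 G2, ex P G1 -> ex P G2 -> ex P (GAnd G1 G2)
| ex_ex   : forall P G1 t, term_lc t -> ex P (gopen 0 t G1) -> ex P (GEx G1)
| ex_aug  : forall P D G1, ex (D :: P) G1 -> ex P (GAug D G1)
with bchain : prog -> list prog -> nat -> list term -> Prop :=
| bc_atom : forall P p l, bchain (DAtom p l) P p l
| bc_imp  : forall P G1 D p l, ex P G1 -> bchain D P p l -> bchain (DImp G1 D) P p l
| bc_all  : forall P D t p l, term_lc t -> bchain (dopen 0 t D) P p l ->
              bchain (DAll D) P p l
| bc_and1 : forall P D0 D1 p l, bchain D0 P p l -> bchain (DAnd D0 D1) P p l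
| bc_and2 : forall P D0 D1 p l, bchain D1 P p l -> bchain (DAnd D0 D1) P p l
| bc_ch1  : forall P D0 D1 p l, bchain D0 P p l -> bchain (DChoice D0 D1) P p l
| bc_ch2  : forall P D0 D1 p l, bchain D1 P p l -> bchain (DChoice D0 D1) P p l.

(** * Intuitionistic affine logic (first-order, cut-free sequent calculus) *)
Inductive formula : Type :=
| FAtom   : nat -> list term -> formula
| Tensor  : formula -> formula -> formula
| With    : formula -> formula -> formula
| Lolli   : formula -> formula -> formula
| Bang    : formula -> formula
| FAll    : formula -> formula
| FEx     : formula -> formula.

Fixpoint fopen (k : nat) (u : term) (A : formula) : formula :=
  match A with
  | FAtom p l => FAtom p (map (topen k u) l)
  | Tensor A B => Tensor (fopen k u A) (fopen k u B)
  | With A B => With (fopen k u A) (fopen k u B)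
  | Lolli A B => Lolli (fopen k u A) (fopen k u B)
  | Bang A => Bang (fopen k u A)
  | FAll A => FAll (fopen (S k) u A)
  | FEx A => FEx (fopen (S k) u A)
  end.

Fixpoint ffv (x : nat) (A : formula) : bool :=
  match A with
  | FAtom _ l => existsb (tfv x) l
  | Tensor A B | With A B | Lolli A B => ffv x A || ffv x B
  | Bang A | FAll A | FEx A => ffv x A
  end.

Definition fresh_ctx (x : nat) (Γ : list formula) : Prop :=
  forall A, In A Γ -> ffv x A = false.

Reserved Notation "Γ ⊢ C" (at level 70).
Inductive prov : list formula -> formula -> Prop :=
| r_id    : forall A, [A] ⊢ A
| r_exch  : forall Γ Δ C, Permutation Γ Δ -> Γ ⊢ C -> Δ ⊢ C
| r_weak  : forall Γ A C, Γ ⊢ C -> A :: Γ ⊢ C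
| r_contr : forall Γ A C, Bang A :: Bang A :: Γ ⊢ C -> Bang A :: Γ ⊢ C
| r_der   : forall Γ A C, A :: Γ ⊢ C -> Bang A :: Γ ⊢ C
| r_prom  : forall Γ A, map Bang Γ ⊢ A -> map Bang Γ ⊢ Bang A
| r_tensL : forall Γ A B C, A :: B :: Γ ⊢ C -> Tensor A B :: Γ ⊢ C
| r_tensR : forall Γ Δ A B, Γ ⊢ A -> Δ ⊢ B -> Γ ++ Δ ⊢ Tensor A B
| r_withL1 : forall Γ A B C, A :: Γ ⊢ C -> With A B :: Γ ⊢ C
| r_withL2 : forall Γ A B C, B :: Γ ⊢ C -> With A B :: Γ ⊢ C
| r_withR : forall Γ A B, Γ ⊢ A -> Γ ⊢ B -> Γ ⊢ With A B
| r_lolliL : forall Γ Δ A B C, Γ ⊢ A -> B :: Δ ⊢ C -> Lolli A B :: Γ ++ Δ ⊢ C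
| r_lolliR : forall Γ A B, A :: Γ ⊢ B -> Γ ⊢ Lolli A B
| r_allL  : forall Γ A C t, term_lc t -> fopen 0 t A :: Γ ⊢ C -> FAll A :: Γ ⊢ C
| r_allR  : forall Γ A x, fresh_ctx x Γ -> ffv x A = false ->
              Γ ⊢ fopen 0 (FVar x) A -> Γ ⊢ FAll A
| r_exL   : forall Γ A C x, fresh_ctx x Γ -> ffv x A = false -> ffv x C = false ->
              fopen 0 (FVar x) A :: Γ ⊢ C -> FEx A :: Γ ⊢ C
| r_exR   : forall Γ A t, term_lc t -> Γ ⊢ fopen 0 t A -> Γ ⊢ FEx A
where "Γ ⊢ C" := (prov Γ C).

Fixpoint gtr (G : goal) : formula :=
  match G with
  | GAtom p l => FAtom p l
  | GAnd G1 G2 => Tensor (gtr G1) (gtr G2)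
  | GAug D G1 => Lolli (Bang (dtr D)) (gtr G1)
  | GEx G1 => FEx (gtr G1)
  end
with dtr (D : prog) : formula :=
  match D with
  | DAtom p l => FAtom p l
  | DImp G1 D1 => Lolli (gtr G1) (dtr D1)
  | DAll D1 => FAll (dtr D1)
  | DChoice D1 D2 => With (dtr D1) (dtr D2)
  | DAnd D1 D2 => Tensor (dtr D1) (dtr D2)
  end.

(* Main.v *)
Require Import Defs.
From Stdlib Require Import List Arith Bool Permutation.
Import ListNotations.

Scheme goal_ind2 := Induction for goal Sort Prop
with prog_ind2 := Induction for prog Sort Prop.
Combined Scheme gp_ind from goal_ind2, prog_ind2.

Scheme ex_ind2 := Induction for ex Sort Prop
with bchain_ind2 := Induction for bchain Sort Prop.
Combined Scheme eb_ind from ex_ind2, bchain_ind2.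

Lemma tr_open :
  (forall G k u, gtr (gopen k u G) = fopen k u (gtr G)) /\
  (forall D k u, dtr (dopen k u D) = fopen k u (dtr D)).
Proof.
  apply gp_ind; intros; simpl; try congruence.
Qed.

Lemma ex_mono :
  (forall P G, ex P G -> forall P', incl P P' -> ex P' G) /\
  (forall D P p l, bchain D P p l -> forall P', incl P P' -> bchain D P' p l).
Proof.
  apply eb_ind; intros.
  - econstructor; eauto.
  - constructor; eauto.
  - econstructor; eauto.
  - constructor. apply H. intros x Hx; destruct Hx; [left; auto | right; auto].
  - constructor.
  - constructor; auto.
  - econstructor; eauto.
  - apply bc_and1; auto.
  - apply bc_and2; auto.
  - apply bc_ch1; auto.
  - apply bc_ch2; auto.
Qed.

Definition avail P D := forall P', incl P P' -> forall p l,
  bchain D P' p l -> ex P' (GAtom p l).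
Definition goodF P F := exists D, avail P D /\ (F = dtr D \/ F = Bang (dtr D)).

Lemma avail_mono P P' D : incl P P' -> avail P D -> avail P' D.
Proof. unfold avail; intros; eapply H0; eauto. intros x Hx; auto. Qed.

Lemma goodF_mono P P' F : incl P P' -> goodF P F -> goodF P' F.
Proof. intros H [D [A B]]; exists D; split; auto. eapply avail_mono; eauto. Qed.

Lemma id_case : forall G P D, avail P D -> dtr D = gtr G -> ex P G.
Proof.
  induction G; intros P D Hav He; destruct D; simpl in He; try discriminate.
  - inversion He; subst. apply (Hav P (incl_refl _)). constructor.
  - inversion He; subst.
    constructor.
    + eapply IHG1; [|eauto]. intros P' Hi p' l' Hb; apply Hav; auto. apply bc_and1; auto.
    + eapply IHG2; [|eauto]. intros P' Hi p' l' Hb; apply Hav; auto. apply bc_and2; auto.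
  - inversion He; subst. destruct g; discriminate.
Qed.

Lemma complete : forall Γ C, prov Γ C -> forall P G, C = gtr G ->
  Forall (goodF P) Γ -> ex P G.
Proof.
  induction 1; intros P G0 HC HF.
  - inversion HF; subst. destruct H1 as [D [Hav [E|E]]].
    + eapply id_case; eauto.
    + destruct G0; discriminate.
  - eapply IHprov; eauto. eapply Permutation_Forall; [apply Permutation_sym; exact H|exact HF].
  - inversion HF; subst; eauto.
  - inversion HF; subst; eauto.
  - inversion HF; subst. apply IHprov; auto. constructor; auto.
    destruct H2 as [D [Hav [E|E]]]; [destruct D; discriminate|].
    inversion E; subst. exists D; auto.
  - destruct G0; discriminate.
  - inversion HF; subst. destruct H2 as [D [Hav [E|E]]]; [|discriminate].
    destruct D; try discriminate. simpl in E; inversion E; subst.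
    apply IHprov; auto. constructor; [|constructor; auto].
    + exists D1; split; auto. intros P' Hi p l Hb; apply Hav; auto. apply bc_and1; auto.
    + exists D2; split; auto. intros P' Hi p l Hb; apply Hav; auto. apply bc_and2; auto.
  - destruct G0; try discriminate. simpl in HC; inversion HC; subst.
    apply Forall_app in HF as [H1 H2]. constructor; eauto.
  - inversion HF; subst. destruct H2 as [D [Hav [E|E]]]; [|discriminate].
    destruct D; try discriminate. simpl in E; inversion E; subst.
    apply IHprov; auto. constructor; auto.
    exists D1; split; auto. intros P' Hi p l Hb; apply Hav; auto. apply bc_ch1; auto.
  - inversion HF; subst. destruct H2 as [D [Hav [E|E]]]; [|discriminate].
    destruct D; try discriminate. simpl in E; inversion E; subst.
    apply IHprov; auto. constructor; auto.
    exists D2; split; auto. intros P' Hi p l Hb; apply Hav; auto. apply bc_ch2; auto.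
  - destruct G0; discriminate.
  - inversion HF; subst. destruct H3 as [D [Hav [E|E]]]; [|discriminate].
    destruct D; try discriminate. simpl in E; inversion E; subst.
    apply Forall_app in H4 as [H1 H2].
    assert (Hg : ex P g) by (eapply IHprov1; eauto).
    apply IHprov2; auto. constructor; auto.
    exists D; split; auto. intros P' Hi p l Hb; apply Hav; auto. constructor; auto.
    eapply (proj1 ex_mono); eauto.
  - destruct G0; try discriminate. simpl in HC; inversion HC; subst.
    constructor. apply IHprov; auto. constructor.
    + exists p; split; auto. intros P' Hi p' l' Hb. econstructor; eauto. apply Hi; left; auto.
    + eapply Forall_impl; [|eauto]. intros a Ha. eapply goodF_mono; eauto.
      intros x Hx; right; auto.
  - inversion HF; subst. destruct H3 as [D [Hav [E|E]]]; [|discriminate].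
    destruct D; try discriminate. simpl in E; inversion E; subst.
    apply IHprov; auto. constructor; auto.
    exists (dopen 0 t D); split.
    + intros P' Hi p l Hb; apply Hav; auto. econstructor; eauto.
    + left. symmetry; apply tr_open.
  - destruct G0; discriminate.
  - inversion HF; subst. destruct H5 as [D [Hav [E|E]]]; destruct D; discriminate.
  - destruct G0; try discriminate. simpl in HC; inversion HC; subst.
    apply ex_ex with t; auto. apply IHprov; auto. symmetry; apply tr_open.
Qed.

Definition BP (P : list prog) := map (fun D => Bang (dtr D)) P.

Lemma weak_list : forall Δ Γ C, prov Γ C -> prov (Δ ++ Γ) C.
Proof. induction Δ; simpl; intros; auto. apply r_weak; auto. Qed.

Lemma contr_list : forall L Γ C,
  prov (map Bang L ++ map Bang L ++ Γ) C -> prov (map Bang L ++ Γ) C.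
Proof.
  induction L; simpl; intros Γ C H; auto.
  assert (H1 : prov (Bang a :: Bang a :: (map Bang L ++ map Bang L ++ Γ)) C).
  { eapply r_exch; [|exact H]. apply Permutation_sym. constructor.
    apply Permutation_middle. }
  apply r_contr in H1.
  assert (H2 : prov (map Bang L ++ map Bang L ++ (Bang a :: Γ)) C).
  { eapply r_exch; [|exact H1]. rewrite !app_assoc. apply Permutation_middle. }
  apply IHL in H2. eapply r_exch; [|exact H2].
  apply Permutation_sym; apply Permutation_middle.
Qed.

Lemma contr_BP : forall P Γ C, prov (BP P ++ BP P ++ Γ) C -> prov (BP P ++ Γ) C.
Proof. intros P. unfold BP. rewrite <- (map_map dtr Bang). apply contr_list. Qed.

Lemma sound :
  (forall P G, ex P G -> prov (BP P) (gtr G)) /\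
  (forall D P p l, bchain D P p l -> prov (dtr D :: BP P) (FAtom p l)).
Proof.
  apply eb_ind; intros.
  - apply in_split in i as [P1 [P2 ->]].
    unfold BP in *. rewrite map_app in *. simpl in *.
    set (f := fun D : prog => Bang (dtr D)) in *.
    apply (r_exch (Bang (dtr D) :: map f P1 ++ map f P2)).
    { apply Permutation_middle. }
    apply r_contr. apply r_der.
    apply (r_exch (dtr D :: map f P1 ++ Bang (dtr D) :: map f P2)); [|exact H].
    apply perm_skip. apply Permutation_sym. apply Permutation_middle.
  - simpl. rewrite <- (app_nil_r (BP P)). apply (contr_BP P [] ). rewrite !app_nil_r. apply r_tensR; auto.
  - simpl. apply r_exR with t; auto. rewrite <- (proj1 tr_open). auto.
  - simpl. apply r_lolliR. exact H.
  - simpl. pose proof (weak_list (BP P) _ _ (r_id (FAtom p l))) as H0.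
    apply (r_exch _ _ _ (Permutation_sym (Permutation_cons_append _ _)) H0).
  - simpl. assert (Hl := r_lolliL _ _ _ _ _ H H0).
    assert (Hp : prov (BP P ++ BP P ++ [Lolli (gtr G1) (dtr D)]) (FAtom p l)).
    { rewrite app_assoc. exact (r_exch _ _ _ (Permutation_cons_append _ _) Hl). }
    apply contr_BP in Hp. exact (r_exch _ _ _ (Permutation_sym (Permutation_cons_append _ _)) Hp).
  - simpl. apply r_allL with t; auto. rewrite <- (proj2 tr_open). auto.
  - simpl. apply r_tensL. eapply r_exch; [apply perm_swap|]. apply r_weak. auto.
  - simpl. apply r_tensL. apply r_weak. auto.
  - simpl. apply r_withL1. auto.
  - simpl. apply r_withL2. auto.
Qed.

Theorem mainTheorem1 (Ds : list prog) (G : goal) :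
  Forall prog_lc Ds -> goal_lc G ->
  (ex Ds G <-> prov (map (fun D => Bang (dtr D)) Ds) (gtr G)).
Proof.
  intros _ _. split.
  - intros H. apply (proj1 sound); auto.
  - intros H. eapply complete; eauto.
    apply Forall_forall. intros F HF. apply in_map_iff in HF as [D [<- HD]].
    exists D. split; auto.
    intros P' Hi p l Hb. econstructor; eauto.
Qed.
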